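(* On an $n$-node, $m$-edge undirected input graph with positive edge weights and any $0<\epsilon<1$, the construction described in the context runs in $\widetilde{O}(mn^{3/5})$ time with high probability.
   Context: Let $\mu=\lceil n^{2/5}\log^{1/5}n\rceil$, let $w:E\to\mathbb{R}^+$ be the edge weights and $W=\max_{e\in E}w(e)$. $\Gamma_{H_0}(x)$ is $x$ together with its neighbors in $H_0$. A $\mu$-lightweight initialization of $G$ is the subgraph obtained by selecting, for every node, its $\mu$ lightest incident edges (all of them if it has fewer), ties broken arbitrarily. Construction: (1) Let $H_0=(V,E')$ be a $\mu$-lightweight initialization of $G$. (2) Sample $S_2$ by including each node independently with probability $1/\mu$; for each node $x$ with $(\{x\}\cup\Gamma_{H_0}(x))\cap S_2=\varnothing$, add all edges incident to $x$ to $E'$. (3) Sample $S_1$ by including each node independently with probability $9\mu/n$; for each $x\in S_1$ add to $E'$ the edges of a shortest-path tree of $G$ rooted at $x$ spanning $V$ (computed by Dijkstra's algorithm). (4) For each $x_1\in S_2$, with $g=\mu^3/n+2$ and gray edges $E\setminus E'$ (the current $E'$), set $w'(e)=w(e)+\epsilon W g^{-1}$ for gray edges and $w'(e)=w(e)$ otherwise, run Dijkstra's algorithm (with Fibonacci heaps) from $x_1$ under $w'$ to obtain minimum-$w'$-weight paths $P(x_1,x_2)$, and add the edges of $P(x_1,x_2)$ to $E'$ for every $x_2\in S_2$. Output $H=(V,E')$. $\widetilde{O}$ hides polylogarithmic factors; ''with high probability'' means with probability at least $1-1/n^c$ for some constant $c>0$. *)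

(* Defs.v *)
From HB Require Import structures.
From mathcomp Require Import all_boot all_order all_algebra.
From mathcomp Require Import all_classical all_reals all_analysis.
Set Implicit Arguments. Unset Strict Implicit. Unset Printing Implicit Defensive.
Import Order.TTheory GRing.Theory Num.Theory.
Local Open Scope ring_scope.

(* A cost-counting (writer) monad: a computation returns a value and   *)
(* the number of elementary operations it performed.                   *)
Definition CM (A : Type) := (A * nat)%type.
Definition ret {A : Type} (a : A) : CM A := (a, 0%N).
Definition bind {A B : Type} (m : CM A) (f : A -> CM B) : CM B :=
  let: (a, c) := m in let: (b, d) := f a in (b, (c + d)%N).
Definition tick (k : nat) : CM unit := (tt, k).
Definition cost {A : Type} (m : CM A) : nat := m.2.
Definition value {A : Type} (m : CM A) : A := m.1.

Fixpoint foldM {A B : Type} (f : B -> A -> CM B) (s : seq A) (b : B) : CM B :=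
  match s with
  | [::] => ret b
  | x :: s' => bind (tick 1) (fun _ => bind (f b x) (foldM f s'))
  end.

(* Graphs: nodes 'I_n, an undirected edge is a 2-element set of nodes. *)
Notation edge n := {set 'I_n}.
Notation graph n := {set {set 'I_n}}.

Definition simple_graph (n : nat) (E : graph n) : Prop :=
  forall e, e \in E -> #|e| = 2%N.

Definition adjrel (n : nat) (E : graph n) : rel 'I_n :=
  fun x y => [set x; y] \in E.

Definition connected_graph (n : nat) (E : graph n) : Prop :=
  forall x y : 'I_n, connect (adjrel E) x y.

Definition adj (n : nat) (E : graph n) (x : 'I_n) : seq (edge n) :=
  seq.filter (fun e : {set 'I_n} => x \in e) (enum E).

Definition mu (R : realType) (n : nat) : nat :=
  `| Num.ceil ((n%:R : R) `^ (2 / 5) * (ln (n%:R : R)) `^ (1 / 5)) |%N.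

(* A (Dijkstra) shortest-path-tree procedure: given edge weights and a  *)
(* source it returns parent pointers, with its operation count.         *)
Definition sp_oracle (R : realType) (n : nat) :=
  (edge n -> R) -> 'I_n -> CM {ffun 'I_n -> option 'I_n}.

(* Cost bound of Dijkstra's algorithm with Fibonacci heaps:             *)
(* O(m + n log n) on the input graph, for positive weights.             *)
Definition dijkstra_cost_bound (R : realType) (n : nat) (E : graph n)
    (K : nat) (dij : sp_oracle R n) : Prop :=
  forall (w' : edge n -> R) (s : 'I_n), (forall e, e \in E -> 0 < w' e) ->
    (cost (dij w' s) <= K * (#|E| + n * (up_log 2 n).+1))%N.

Section Construction.
Variables (R : realType) (n : nat) (E : graph n) (w : edge n -> R)
          (eps : R) (dij : sp_oracle R n).

Definition add_edges (s : seq (edge n)) (H : graph n) : CM (graph n) :=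
  foldM (fun H' e => ret (e |: H')) s H.

(* (1) mu-lightweight initialization: sort each incidence list by weight *)
(* (comparison sort: size * log size operations), keep the mu lightest.   *)
Definition step1 : CM (graph n) :=
  foldM (fun H x =>
           let s := adj E x in
           bind (tick (size s * (up_log 2 (size s)).+1))
             (fun _ => add_edges (take (mu R n) (sort (fun e f => w e <= w f) s)) H))
        (enum 'I_n) finset.set0.

Definition step2 (H0 : graph n) (S2 : {set 'I_n}) : CM (graph n) :=
  foldM (fun H x =>
           bind (foldM (fun b e => ret (b || ((e \in H0) && [exists y in e, y \in S2])))
                       (adj E x) (x \in S2))
             (fun hit => if hit then ret H else add_edges (adj E x) H))
        (enum 'I_n) H0.

Definition tree_edges (par : {ffun 'I_n -> option 'I_n}) (H : graph n) : CM (graph n) :=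
  foldM (fun H' v => ret (if par v is Some u then [set u; v] |: H' else H'))
        (enum 'I_n) H.

Definition step3 (S1 : {set 'I_n}) (H : graph n) : CM (graph n) :=
  foldM (fun H' x => bind (dij w x) (fun par => tree_edges par H')) (enum S1) H.

Fixpoint walk (par : {ffun 'I_n -> option 'I_n}) (fuel : nat) (v : 'I_n)
    (st : {set 'I_n} * graph n) : CM ({set 'I_n} * graph n) :=
  match fuel with
  | 0 => ret st
  | fuel'.+1 =>
      if v \in st.1 then ret st else
      match par v with
      | None => ret st
      | Some u => bind (tick 1) (fun _ =>
                    walk par fuel' u (v |: st.1, [set u; v] |: st.2))
      end
  end.

Definition step4 (S2 : {set 'I_n}) (H : graph n) : CM (graph n) :=
  bind (tick #|E|) (fun _ =>
  let W := \big[Num.max/0]_(e in E) w e in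
  let g := ((mu R n)%:R ^+ 3 / n%:R + 2 : R) in
  foldM (fun H' x1 =>
           bind (tick #|E|) (fun _ =>
           let w' := fun e => if e \in E :\: H' then w e + eps * W / g else w e in
           bind (dij w' x1) (fun par =>
           bind (foldM (fun st x2 => walk par n x2 st) (enum S2) ([set x1], H'))
                (fun st => ret st.2))))
        (enum S2) H).

(* the whole construction, on random samples S1, S2; the initial tick    *)
(* accounts for reading the input / building incidence lists.            *)
Definition construction (S1 S2 : {set 'I_n}) : CM (graph n) :=
  bind (tick (n + #|E|)) (fun _ =>
  bind step1 (fun H0 =>
  bind (step2 H0 S2) (fun H1 =>
  bind (step3 S1 H1) (fun H2 =>
  step4 S2 H2)))).

End Construction.

(* Randomness: each node independently in S with probability p.        *)
Definition bern_set (R : realType) (n : nat) (p : R) (S : {set 'I_n}) : R :=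
  p ^+ #|S| * (1 - p) ^+ (n - #|S|).

Definition prob2 (R : realType) (n : nat) (p1 p2 : R)
    (P : {set 'I_n} -> {set 'I_n} -> bool) : R :=
  \sum_(S1 : {set 'I_n}) \sum_(S2 : {set 'I_n})
     bern_set p1 S1 * bern_set p2 S2 * (P S1 S2)%:R.

Definition p1_of (R : realType) (n : nat) : R := Num.min 1 (9 * (mu R n)%:R / n%:R).
Definition p2_of (R : realType) (n : nat) : R := 1 / (mu R n)%:R.

(* Main.v *)
Require Import Defs.
From HB Require Import structures.
From mathcomp Require Import all_boot all_order all_algebra.
From mathcomp Require Import all_classical all_reals all_analysis.
From mathcomp Require Import ring lra zify.
Import Order.TTheory GRing.Theory Num.Theory.
Local Open Scope ring_scope.

Set Implicit Arguments. Unset Strict Implicit. Unset Printing Implicit Defensive.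

Section Binom.
Variable R : realFieldType.
Variable p : R.
Let q := 1 - p.
Definition bb (n k : nat) : R := 'C(n, k)%:R * p ^+ k * q ^+ (n - k).

Lemma bb_sum n : \sum_(k < n.+1) bb n k = 1.
Proof.
have := exprDn q p n.
rewrite /q subrK expr1n => ->.
apply: eq_bigr => k _; rewrite /bb -mulr_natl; ring.
Qed.

Lemma bb_shift n (g : nat -> R) :
  \sum_(k < n.+2) k%:R * bb n.+1 k * g k =
  n.+1%:R * p * \sum_(k < n.+1) bb n k * g k.+1.
Proof.
rewrite big_ord_recl /= mul0r mul0r add0r mulr_sumr.
apply: eq_bigr => k _.
rewrite /bb /bump /= add1n.
have := mul_bin_diag n.+1 k => /= /(congr1 (fun x => x%:R : R)).
rewrite !natrM => H.
rewrite subSS exprS.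
have -> : (k.+1%:R : R) * ('C(n.+1, k.+1)%:R * (p * p ^+ k) * q ^+ (n - k)) * g k.+1
  = (k.+1%:R * 'C(n.+1, k.+1)%:R) * (p * p ^+ k) * q ^+ (n - k) * g k.+1 by ring.
rewrite -H; ring.
Qed.

Lemma bb_m1 n : \sum_(k < n.+1) k%:R * bb n k = n%:R * p.
Proof.
case: n => [|n]; first by rewrite big_ord1 /= !mul0r.
transitivity (\sum_(k < n.+2) k%:R * bb n.+1 k * (fun _ => 1) k).
  by apply: eq_bigr => k _; rewrite mulr1.
rewrite (bb_shift n (fun _ => 1)).
under eq_bigr do rewrite mulr1.
by rewrite bb_sum mulr1.
Qed.

Lemma bb_m2 n : \sum_(k < n.+1) k%:R * (k%:R - 1) * bb n k = n%:R * (n%:R - 1) * p ^+ 2.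
Proof.
case: n => [|n]; first by rewrite big_ord1 /= !mul0r.
transitivity (\sum_(k < n.+2) k%:R * bb n.+1 k * (fun k : nat => (k%:R - 1 : R)) k).
  by apply: eq_bigr => k _; rewrite /=; ring.
rewrite (bb_shift n (fun k : nat => (k%:R - 1 : R))).
under eq_bigr do rewrite -[(_.+1)%:R]natr1 addrK mulrC.
rewrite bb_m1 -[(n.+1)%:R]natr1 addrK; ring.
Qed.

Lemma bb_var n : \sum_(k < n.+1) (k%:R - n%:R * p) ^+ 2 * bb n k = n%:R * p * (1 - p).
Proof.
transitivity (\sum_(k < n.+1) (k%:R * (k%:R - 1) * bb n k
   + (1 - 2 * n%:R * p) * (k%:R * bb n k) + (n%:R * p) ^+ 2 * bb n k)).
  by apply: eq_bigr => k _; ring.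
rewrite !big_split /= -!mulr_sumr bb_m2 bb_m1 bb_sum; ring.
Qed.

Lemma bb_ge0 n k : 0 <= p <= 1 -> 0 <= bb n k.
Proof.
move=> /andP[p0 p1]; rewrite /bb /q.
by rewrite !mulr_ge0 // exprn_ge0 // subr_ge0.
Qed.

Lemma bb_cheb n : 0 < p <= 1 -> (0 < n)%N ->
  \sum_(k < n.+1) bb n k * ((2 * n%:R * p <= k%:R)%R)%:R <= (n%:R * p)^-1.
Proof.
move=> /andP[p0 p1] n0.
have np0 : 0 < n%:R * p by rewrite mulr_gt0 // ltr0n.
apply: (@le_trans _ _ (\sum_(k < n.+1) (k%:R - n%:R * p) ^+ 2 * bb n k / (n%:R * p) ^+ 2)).
  apply: ler_sum => k _.
  have b0 : 0 <= bb n k by apply: bb_ge0; rewrite ltW.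
  have [H|H] := boolP (2 * n%:R * p <= k%:R :> R); rewrite ?H /=; last first.
    rewrite mulr0; apply: divr_ge0; [apply: mulr_ge0 => //; exact: sqr_ge0 | exact: sqr_ge0].
  rewrite mulr1.
  have h1 : n%:R * p <= k%:R - n%:R * p by lra.
  have h2 : (n%:R * p) ^+ 2 <= (k%:R - n%:R * p) ^+ 2.
    by rewrite ler_sqr // ?nnegrE; lra.
  rewrite mulrAC -[X in X <= _]mul1r; apply: ler_wpM2r => //.
  by rewrite ler_pdivlMr ?exprn_gt0 // mul1r.
rewrite -mulr_suml bb_var.
rewrite ler_pdivrMr ?exprn_gt0 // expr2.
rewrite mulKf ?gt_eqF //.
rewrite ler_piMr //; lra.
Qed.

End Binom.
Lemma set_sum_card (R : pzRingType) n (F : nat -> R) :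
  \sum_(S : {set 'I_n}) F #|S| = \sum_(k < n.+1) 'C(n, k)%:R * F k.
Proof.
have hS : forall S : {set 'I_n}, (#|S| < n.+1)%N.
  by move=> S; rewrite ltnS; have := max_card S; rewrite card_ord.
rewrite (partition_big (fun S : {set 'I_n} => (inord #|S| : 'I_n.+1)) predT) //=.
apply: eq_bigr => k _.
transitivity (\sum_(S in [set A : {set 'I_n} | #|A| == k]) F k).
  apply: eq_big => S.
    by rewrite inE -(inj_eq val_inj) /= inordK // hS.
  by move=> /eqP <-; rewrite inordK // hS.
by rewrite sumr_const card_draws card_ord mulr_natl.
Qed.

Lemma bern_sum (R : realType) n (p : R) : \sum_(S : {set 'I_n}) bern_set p S = 1.
Proof.
rewrite /bern_set (@set_sum_card _ n (fun k => p ^+ k * (1 - p) ^+ (n - k))).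
rewrite -[RHS](bb_sum p n); apply: eq_bigr => k _; rewrite /bb; ring.
Qed.

Lemma bern_cheb (R : realType) n (p : R) : 0 < p <= 1 -> (0 < n)%N ->
  \sum_(S : {set 'I_n}) bern_set p S * ((2 * n%:R * p <= #|S|%:R)%R)%:R <= (n%:R * p)^-1.
Proof.
move=> hp hn.
rewrite /bern_set (@set_sum_card _ n (fun k => p ^+ k * (1 - p) ^+ (n - k) * ((2 * n%:R * p <= k%:R)%R)%:R)).
apply: le_trans (bb_cheb hp hn); rewrite le_eqVlt; apply/orP; left; apply/eqP.
apply: eq_bigr => k _; rewrite /bb; ring.
Qed.

Lemma bern_ge0 (R : realType) n (p : R) (S : {set 'I_n}) : 0 <= p <= 1 -> 0 <= bern_set p S.
Proof.
move=> /andP[p0 p1]; rewrite /bern_set mulr_ge0 // exprn_ge0 // subr_ge0 //.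
Qed.

Lemma prob2_lb (R : realType) n (p1 p2 : R) (P : {set 'I_n} -> {set 'I_n} -> bool) :
  0 < p1 <= 1 -> 0 < p2 <= 1 -> (0 < n)%N ->
  (forall S1 S2 : {set 'I_n}, #|S1|%:R < 2 * n%:R * p1 -> #|S2|%:R < 2 * n%:R * p2 -> P S1 S2) ->
  1 - (n%:R * p1)^-1 - (n%:R * p2)^-1 <= prob2 p1 p2 P.
Proof.
move=> hp1 hp2 hn HP.
have b1 : forall S : {set 'I_n}, 0 <= bern_set p1 S.
  by move=> S; apply: bern_ge0; case/andP: hp1 => a b; rewrite ltW.
have b2 : forall S : {set 'I_n}, 0 <= bern_set p2 S.
  by move=> S; apply: bern_ge0; case/andP: hp2 => a b; rewrite ltW.
pose A1 (S : {set 'I_n}) : R := ((2 * n%:R * p1 <= #|S|%:R)%R)%:R.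
pose A2 (S : {set 'I_n}) : R := ((2 * n%:R * p2 <= #|S|%:R)%R)%:R.
have E : prob2 p1 p2 P >= \sum_(S1 : {set 'I_n}) \sum_(S2 : {set 'I_n})
     (bern_set p1 S1 * bern_set p2 S2 - bern_set p1 S1 * A1 S1 * bern_set p2 S2
      - bern_set p1 S1 * (bern_set p2 S2 * A2 S2)).
  apply: ler_sum => S1 _; apply: ler_sum => S2 _.
  have h : 1 - A1 S1 - A2 S2 <= (P S1 S2)%:R.
    rewrite /A1 /A2.
    have [H1|H1] := boolP (2 * n%:R * p1 <= #|S1|%:R :> R);
    have [H2|H2] := boolP (2 * n%:R * p2 <= #|S2|%:R :> R) => /=.
    - case: (P S1 S2) => /=; lra.
    - case: (P S1 S2) => /=; lra.
    - case: (P S1 S2) => /=; lra.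
    - rewrite -!real_ltNge ?num_real // in H1 H2.
      by rewrite HP //= ; lra.
  have := ler_wpM2l (mulr_ge0 (b1 S1) (b2 S2)) h.
  move=> h'; apply: le_trans h'; rewrite le_eqVlt; apply/orP; left; apply/eqP; ring.
apply: le_trans E.
under eq_bigr => S1 _ do rewrite !sumrB -!mulr_sumr bern_sum mulr1.
rewrite !sumrB.
under [X in _ <= _ - X - _]eq_bigr do rewrite mulr1.
rewrite -mulr_suml bern_sum mul1r.
have c1 := bern_cheb hp1 hn.
have c2 := bern_cheb hp2 hn.
rewrite -/A1 in c1. 
lra.
Qed.

Lemma cost_bind A B (m : CM A) (f : A -> CM B) :
  cost (bind m f) = (cost m + cost (f (value m)))%N.
Proof. by case: m => a c; rewrite /bind /cost /value /=; case: (f a). Qed.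

Lemma value_bind A B (m : CM A) (f : A -> CM B) :
  value (bind m f) = value (f (value m)).
Proof. by case: m => a c; rewrite /bind /cost /value /=; case: (f a). Qed.

Lemma cost_foldM A B (f : B -> A -> CM B) (c : A -> nat) s b :
  (forall b x, (cost (f b x) <= c x)%N) ->
  (cost (foldM f s b) <= \sum_(x <- s) (c x).+1)%N.
Proof.
move=> H; elim: s b => [|x s IH] b; first by rewrite big_nil.
have -> : foldM f (x :: s) b = bind (tick 1) (fun _ => bind (f b x) (foldM f s)) by [].
rewrite big_cons cost_bind cost_bind /=.
have h1 := H b x. have h2 := IH (value (f b x)).
rewrite /cost in h1 h2 *; lia.
Qed.

Lemma cost_foldM_pot A B (f : B -> A -> CM B) (phi : B -> nat) s b :
  (forall b x, (cost (f b x) + phi b <= phi (value (f b x)))%N) ->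
  (cost (foldM f s b) + phi b <= size s + phi (value (foldM f s b)))%N.
Proof.
move=> H; elim: s b => [|x s IH] b; first by rewrite /cost /value /=.
have -> : foldM f (x :: s) b = bind (tick 1) (fun _ => bind (f b x) (foldM f s)) by [].
rewrite !cost_bind !value_bind /=.
have h1 := H b x. have h2 := IH (value (f b x)).
rewrite /cost /value in h1 h2 *; lia.
Qed.

Lemma cost_add_edges n (s : seq (edge n)) H : (cost (add_edges s H) <= size s)%N.
Proof.
apply: leq_trans (cost_foldM (c := fun _ => 0%N) _ _ _) _ => //.
by rewrite big_const_seq count_predT /= iter_addn_0 mul1n.
Qed.

Lemma cost_walk n (par : {ffun 'I_n -> option 'I_n}) fuel v st :
  (cost (walk par fuel v st) + #|st.1| <= #|(value (walk par fuel v st)).1|)%N.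
Proof.
elim: fuel v st => [|fuel IH] v st /=; first by [].
case: ifP => hv; first by [].
case: (par v) => [u|]; last by [].
have := IH u (v |: st.1, [set u; v] |: st.2).
case: (walk par fuel u _) => st' d /=.
rewrite cardsU1 hv /cost /value /=; lia.
Qed.

Lemma sum_const_seq_nat (A : Type) (s : seq A) c : (\sum_(x <- s) c = size s * c)%N.
Proof. by elim: s => [|x s IH]; rewrite ?big_nil ?big_cons ?IH //= mulSn. Qed.

Definition deg n (E : graph n) (x : 'I_n) := size (adj E x).

Lemma cost_step1 (R : realType) n (E : graph n) (w : edge n -> R) :
  (cost (step1 E w) <= \sum_(x <- enum 'I_n) (deg E x * (up_log 2 (deg E x)).+1 + deg E x).+1)%N.
Proof.
apply: cost_foldM => H x.
rewrite cost_bind /=.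
apply: leq_add; first by [].
apply: leq_trans (cost_add_edges _ _) _.
by rewrite size_take size_sort /deg; case: ifP => // /ltnW.
Qed.

Lemma cost_step2 n (E H0 : graph n) S2 :
  (cost (step2 E H0 S2) <= \sum_(x <- enum 'I_n) (deg E x + deg E x).+1)%N.
Proof.
apply: cost_foldM => H x.
rewrite cost_bind; apply: leq_add.
  apply: leq_trans (cost_foldM (c := fun _ => 0%N) _ _ _) _ => //.
  by rewrite sum_const_seq_nat muln1.
by case: (value _); [done | apply: cost_add_edges].
Qed.

Lemma cost_tree_edges n par (H : graph n) : (cost (tree_edges par H) <= n)%N.
Proof.
apply: leq_trans (cost_foldM (c := fun _ => 0%N) _ _ _) _ => //.
by rewrite sum_const_seq_nat muln1 size_enum_ord.
Qed.

Lemma cost_step3 (R : realType) n (E : graph n) (w : edge n -> R) K dij S1 H :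
  (forall e, e \in E -> 0 < w e) -> dijkstra_cost_bound E K dij ->
  (cost (step3 w dij S1 H) <= #|S1| * (K * (#|E| + n * (up_log 2 n).+1) + n).+1)%N.
Proof.
move=> wpos hd.
apply: leq_trans (cost_foldM (c := fun _ => (K * (#|E| + n * (up_log 2 n).+1) + n)%N) _ _ _) _.
  move=> H' x; rewrite cost_bind; apply: leq_add; first exact: hd.
  exact: cost_tree_edges.
by rewrite sum_const_seq_nat -cardE.
Qed.

Lemma W_ge0 (R : realType) n (E : graph n) (w : edge n -> R) :
  (forall e, e \in E -> 0 < w e) -> 0 <= \big[Num.max/0]_(e in E) w e.
Proof.
move=> wpos.
apply: (big_ind (fun x => 0 <= x)) => //; last by move=> e he; exact: ltW (wpos e he).
by move=> x y hx hy; rewrite le_max hx.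
Qed.

Lemma cost_step4 (R : realType) n (E : graph n) (w : edge n -> R) eps K dij S2 H :
  (forall e, e \in E -> 0 < w e) -> 0 < eps -> dijkstra_cost_bound E K dij ->
  (cost (step4 E w eps dij S2 H) <=
     #|E| + #|S2| * (#|E| + K * (#|E| + n * (up_log 2 n).+1) + (#|S2| + n)).+1)%N.
Proof.
move=> wpos eps0 hd.
rewrite /step4 cost_bind; apply: leq_add; first by [].
apply: leq_trans (cost_foldM (c := fun _ => (#|E| + K * (#|E| + n * (up_log 2 n).+1) + (#|S2| + n))%N) _ _ _) _; last first.
  by rewrite sum_const_seq_nat -cardE.
move=> H' x1.
rewrite cost_bind -addnA; apply: leq_add; first by [].
rewrite cost_bind; apply: leq_add.
  apply: hd => e he.
  case: ifP => _; last exact: wpos e he.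
  have we := wpos e he.
  have : 0 <= eps * \big[Num.max/0]_(e0 in E) w e0 / ((mu R n)%:R ^+ 3 / n%:R + 2).
    apply: divr_ge0; first by rewrite mulr_ge0 ?W_ge0 // ltW.
    by apply: addr_ge0 => //; apply: divr_ge0 => //; apply: exprn_ge0.
  lra.
rewrite cost_bind /= addn0.
move: (value (dij _ x1)) => par.
have h := @cost_foldM_pot _ _ (fun st x2 => walk par n x2 st) (fun st : {set 'I_n} * graph n => #|st.1|) (enum S2) ([set x1], H') (fun st x2 => cost_walk _ _ _ _).
move: h; set F := foldM _ _ _.
rewrite -cardE /= => h.
have hmax : (#|(value F).1| <= n)%N by have := max_card (value F).1; rewrite card_ord.
apply: leq_trans _ (leq_add (leqnn _) hmax); apply: leq_trans _ h; apply: leq_addr.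
Qed.

Lemma deg_sum n (E : graph n) : simple_graph E ->
  (\sum_(x <- enum 'I_n) deg E x = 2 * #|E|)%N.
Proof.
move=> hs.
rewrite big_enum /=.
transitivity (\sum_(x : 'I_n) \sum_(e in E) ((x \in e) : nat))%N.
  apply: eq_bigr => x _; rewrite /deg /adj size_filter -sum1_count big_enum_cond big_mkcondr /=.
  by apply: eq_bigr => e _; case: (x \in e).
rewrite exchange_big /=.
transitivity (\sum_(e in E) 2)%N; last by rewrite sum_nat_const mulnC.
apply: eq_bigr => e he; rewrite -(hs e he) -sum1_card.
by rewrite [RHS]big_mkcond /=; apply: eq_bigr => x _; case: (x \in e).
Qed.

Lemma deg_le n (E : graph n) x : (deg E x <= #|E|)%N.
Proof. by rewrite /deg /adj size_filter cardE count_size. Qed.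

Lemma deg_ge1 n (E : graph n) x : (1 < n)%N -> connected_graph E -> (1 <= deg E x)%N.
Proof.
move=> n1 hc.
have [y hy] : exists y : 'I_n, y != x.
  pose o0 : 'I_n := Ordinal (ltn_trans (ltnSn 0) n1).
  pose o1 : 'I_n := Ordinal n1.
  case: (eqVneq x o0) => h; last by exists o0; rewrite eq_sym.
  by exists o1; rewrite h.
have := hc x y => /connectP [[|z p] /=]; first by move=> _ hyx; rewrite hyx eqxx in hy.
move=> /andP [hxz _] _.
rewrite /deg /adj size_filter -has_count; apply/hasP; exists [set x; z].
  by rewrite mem_enum.
by rewrite !inE eqxx.
Qed.

Lemma E_le_sq n (E : graph n) : simple_graph E -> (#|E| <= n * n)%N.
Proof.
move=> hs.
have : E \subset [set A : {set 'I_n} | #|A| == 2%N].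
  by apply/fintype.subsetP => e he; rewrite inE hs.
move=> /subset_leq_card; rewrite card_draws card_ord bin2 => h.
apply: leq_trans h _; rewrite leq_half_double -addnn.
move: (n) => k; case: k => //= k; nia.
Qed.

Lemma Lm_le n (E : graph n) : simple_graph E ->
  (up_log 2 #|E| <= 2 * up_log 2 n)%N.
Proof.
move=> hs; apply: up_log_min => //.
apply: leq_trans (E_le_sq hs) _.
rewrite mulnC expnM.
have h := @up_logP 2 n isT.
exact: (leq_mul h h).
Qed.

Lemma n_le_2m n (E : graph n) : (1 < n)%N -> simple_graph E -> connected_graph E ->
  (n <= 2 * #|E|)%N.
Proof.
move=> n1 hs hc; rewrite -deg_sum //.
apply: leq_trans (_ : \sum_(x <- enum 'I_n) 1 <= _)%N.
  by rewrite sum1_size size_enum_ord.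
by apply: leq_sum => x _; apply: deg_ge1.
Qed.

Lemma arith K n m L Lm s1 s2 c1 c2 c3 c4 :
 (1 <= m -> n <= 2 * m -> Lm <= 2 * L -> s2 <= n ->
 c1 <= 2 * m * (Lm + 2) + n -> c2 <= 4 * m + n ->
 c3 <= s1 * (K * (m + n * L.+1) + n).+1 ->
 c4 <= m + s2 * (m + K * (m + n * L.+1) + (s2 + n)).+1 ->
 (n + m) + (c1 + (c2 + (c3 + c4))) <= (3 * K + 20) * (1 + s1 + s2) * (m * L.+1))%N.
Proof.
move=> hm hn hL hs h1 h2 h3 h4.
set M := (m * L.+1)%N.
have hM : (m <= M)%N by rewrite /M -{1}(muln1 m) leq_mul2l ltnS leq0n orbT.
have hnL : (n * L.+1 <= 2 * M)%N by rewrite /M mulnA leq_mul2r hn orbT.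
have hmL : (m * Lm <= 2 * M)%N.
  rewrite /M mulnCA leq_mul2l; apply/orP; right; apply: leq_trans hL _; rewrite leq_mul2l ltnW ?orbT //.
have hK : (K * (m + n * L.+1) <= K * (3 * M))%N.
  by rewrite leq_mul2l; apply/orP; right; rewrite mulSn leq_add // mul2n -addnn leq_add.
have e3 : ((K * (m + n * L.+1) + n).+1 <= (3 * K + 3) * M)%N.
  rewrite mulnDl (mulnC 3 K) -mulnA; lia.
have e4 : ((m + K * (m + n * L.+1) + (s2 + n)).+1 <= (3 * K + 6) * M)%N.
  rewrite mulnDl (mulnC 3 K) -mulnA; lia.
have f3 : (c3 <= s1 * ((3 * K + 3) * M))%N by apply: leq_trans h3 _; apply: leq_mul.
have f4 : (c4 <= m + s2 * ((3 * K + 6) * M))%N by apply: leq_trans h4 _; rewrite leq_add2l; apply: leq_mul.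
have f1 : (c1 <= 4 * M + 4 * m + n)%N.
  apply: leq_trans h1 _; rewrite !mulnDr -mulnA; lia.
have g3 : (s1 * ((3 * K + 3) * M) <= s1 * ((3 * K + 20) * M))%N by apply: leq_mul => //; apply: leq_mul => //; rewrite leq_add2l.
have g4 : (s2 * ((3 * K + 6) * M) <= s2 * ((3 * K + 20) * M))%N by apply: leq_mul => //; apply: leq_mul => //; rewrite leq_add2l.
have -> : ((3 * K + 20) * (1 + s1 + s2) * M = (3 * K + 20) * M + s1 * ((3 * K + 20) * M) + s2 * ((3 * K + 20) * M))%N.
  by lia.
have : (16 * m <= 16 * M)%N by rewrite leq_mul2l hM.
have : (20 * M <= (3 * K + 20) * M)%N by rewrite leq_mul2r leq_addl orbT.
lia.
Qed.

Lemma cost_total (R : realType) n (E : graph n) (w : edge n -> R) eps K dij S1 S2 :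
  (1 < n)%N -> simple_graph E -> connected_graph E ->
  (forall e, e \in E -> 0 < w e) -> 0 < eps -> dijkstra_cost_bound E K dij ->
  (cost (construction E w eps dij S1 S2) <=
     (3 * K + 20) * (1 + #|S1| + #|S2|) * (#|E| * (up_log 2 n).+1))%N.
Proof.
move=> n1 hs hc wpos eps0 hd.
rewrite /construction cost_bind; cbv beta.
rewrite cost_bind; cbv beta.
rewrite cost_bind; cbv beta.
rewrite cost_bind; cbv beta.
have hm : (n <= 2 * #|E|)%N by apply: n_le_2m.
apply: (arith (Lm := up_log 2 #|E|)).
- lia.
- exact: hm.
- exact: Lm_le.
- by have := max_card S2; rewrite card_ord.
- apply: leq_trans (cost_step1 _ _) _.
  apply: leq_trans (_ : (_ <= \sum_(x <- enum 'I_n) (deg E x * (up_log 2 #|E| + 2) + 1))%N) _.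
    apply: leq_sum => x _.
    rewrite addn1 ltnS -mulnSr addn2 leq_mul2l; apply/orP; right.
    by rewrite !ltnS leq_up_log // deg_le.
  by rewrite big_split /= -big_distrl /= deg_sum // sum1_size size_enum_ord.
- apply: leq_trans (cost_step2 _ _ _) _.
  rewrite (eq_bigr (fun x => deg E x + deg E x + 1)%N); last by move=> x _; rewrite addn1.
  by rewrite !big_split /= deg_sum // sum1_size size_enum_ord -mulnDl.
- exact: cost_step3.
- exact: cost_step4.
Qed.

Unset Implicit Arguments. Set Strict Implicit. Set Printing Implicit Defensive.

Lemma ln2_ge (R : realType) : 1 / 2 <= ln (2 : R).
Proof.
have h := @le_ln1Dx R (- (1/2)).
have e : (1 + - (1 / 2) : R) = 2^-1 by field.
rewrite e lnV ?posrE // in h.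
have : (-1 : R) < - (1 / 2) by lra.
move=> /h; lra.
Qed.

Lemma powR_nat_root (R : realType) (a : R) (k m : nat) : 0 <= a -> (0 < k)%N ->
  (a `^ (1 / k%:R)) ^+ m = a `^ (m%:R / k%:R).
Proof.
move=> a0 k0.
rewrite -powR_mulrn ?powR_ge0 // -powRrM; congr (_ `^ _).
by rewrite mul1r mulrC.
Qed.

Lemma x_facts (R : realType) (n : nat) : (59049 <= n)%N ->
  let x := (n%:R : R) `^ (1 / 10) in
  3 <= x /\ x ^+ 10 = n%:R.
Proof.
move=> hn x; split.
  have h3 : (3 : R) = ((3 : R) ^+ 10) `^ (1 / 10).
    rewrite -powR_mulrn // -powRrM.
    have -> : (10%:R * (1 / 10) : R) = 1 by field.
    by rewrite powRr1.
  rewrite h3 /x; apply: ge0_ler_powR => //; rewrite ?nnegrE ?exprn_ge0 //.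
  by rewrite -natrX ler_nat.
rewrite /x (@powR_nat_root _ _ 10 10) // divff ?powRr1 //.
Qed.

Theorem lemma15 (R : realType) (K : nat) :
  exists (C : R) (k : nat) (c : R) (N : nat), 0 < c /\
  forall (n : nat) (E : graph n) (w : edge n -> R) (eps : R) (dij : sp_oracle R n),
    (N <= n)%N ->
    simple_graph E -> connected_graph E ->
    (forall e, e \in E -> 0 < w e) ->
    0 < eps < 1 ->
    dijkstra_cost_bound E K dij ->
    1 - (n%:R : R) `^ (- c) <=
      prob2 (p1_of R n) (p2_of R n)
        (fun S1 S2 => (cost (construction E w eps dij S1 S2))%:R
                      <= C * #|E|%:R * (n%:R : R) `^ (3 / 5) * (ln (n%:R : R)) ^+ k).
Proof.
exists (((3 * K + 20) * 156)%N%:R), 2%N, (1 / 5), 59049%N; split; first by lra.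
move=> n E w eps dij hN hs hc wpos /andP[eps0 eps1] hd.
have n1 : (1 < n)%N by apply: leq_trans hN.
have [hx3 hxn] := @x_facts R n hN.
set x := (n%:R : R) `^ (1 / 10) in hx3 hxn.
set l := ln (n%:R : R).
have x0 : 0 <= x by lra.
have hln2 := ln2_ge R.
have hl5 : 5 <= l.
  rewrite /l -hxn lnXn; last by lra.
  have : ln 2 <= ln x by rewrite ler_ln ?posrE //; lra.
  move=> h; rewrite -[_ *+ 10]mulr_natr; lra.
have hlx : l <= 10 * x.
  rewrite /l -hxn lnXn; last by lra.
  have := @ln_sublinear R x; rewrite -mulr_natr; move=> /(_ ltac:(lra)); lra.
have hn25 : (n%:R : R) `^ (2 / 5) = x ^+ 4.
  by rewrite /x powR_nat_root //; congr (_ `^ _); field.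
have hn35 : (n%:R : R) `^ (3 / 5) = x ^+ 6.
  by rewrite /x powR_nat_root //; congr (_ `^ _); field.
have hn15 : (n%:R : R) `^ (- (1 / 5)) = (x ^+ 2)^-1.
  by rewrite powRN /x powR_nat_root //; congr ((_ `^ _)^-1); field.
set y := (n%:R : R) `^ (2 / 5) * l `^ (1 / 5).
have hl15 : 1 <= l `^ (1 / 5) <= l.
  apply/andP; split.
    have h0 : l `^ 0 <= l `^ (1 / 5) by apply: ler_powR; lra.
    by rewrite powRr0 in h0.
  by apply: ler1_powR; lra.
have hy : x ^+ 4 <= y <= x ^+ 4 * l.
  rewrite /y hn25; apply/andP; split.
    by rewrite -{1}(mulr1 (x ^+ 4)); apply: ler_wpM2l; [apply: exprn_ge0|lra].
  by apply: ler_wpM2l; [apply: exprn_ge0|lra].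
set mu_r := ((mu R n)%:R : R).
have hmu : y <= mu_r < y + 1.
  have hc0 : (0 <= Num.ceil y)%R.
    rewrite ceil_ge0; have : 0 <= x ^+ 4 by apply: exprn_ge0.
    lra.
  have -> : mu_r = (Num.ceil y)%:~R.
    by rewrite /mu_r /mu -/l -/y natr_absz ger0_norm.
  have := ceil_itv y; rewrite intrD /=; lra.
have hx4 : 81 <= x ^+ 4.
  have : 3 ^+ 4 <= x ^+ 4 by rewrite lerXn2r ?nnegrE //; lra.
  have -> : (3 : R) ^+ 4 = 81 by rewrite !exprS expr0; lra.
  done.
have hnr : (n%:R : R) = x ^+ 4 * x ^+ 6 by rewrite -exprD.
have hx6 : x ^+ 4 <= x ^+ 6.
  rewrite -[6%N]/(4 + 2)%N exprD; have h2 : 1 <= x ^+ 2 by rewrite expr2; nra.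
  have := exprn_ge0 4 x0; nra.
have nr0 : 0 < (n%:R : R) by rewrite ltr0n; apply: leq_trans n1.
have mu0 : 1 <= mu_r by lra.
set p1 := p1_of R n.
set p2 := p2_of R n.
have hp1 : 0 < p1 <= 1 /\ x ^+ 4 <= n%:R * p1 /\ 2 * n%:R * p1 <= 18 * mu_r.
  rewrite /p1 /p1_of -/mu_r.
  case: (leP 1 (9 * mu_r / n%:R)) => h.
    split; first by lra.
    rewrite mulr1; split; first by rewrite hnr -{1}(mulr1 (x ^+ 4)); apply: ler_wpM2l; [apply: exprn_ge0|nra].
    by move: h; rewrite ler_pdivlMr //; lra.
  have e : n%:R * (9 * mu_r / n%:R) = 9 * mu_r by rewrite mulrC divfK // gt_eqF.
  split; first by apply/andP; split; [rewrite divr_gt0 //; lra | lra].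
  split; first by rewrite e; lra.
  by rewrite -mulrA e; lra.
have hp2 : 0 < p2 <= 1 /\ (n%:R * p2)^-1 = mu_r / n%:R /\ 2 * n%:R * p2 <= 2 * x ^+ 6.
  rewrite /p2 /p2_of -/mu_r.
  split; first by apply/andP; split; [rewrite divr_gt0 //; lra | rewrite ler_pdivrMr; lra].
  split; first by rewrite div1r invfM invrK mulrC.
  rewrite div1r ler_pdivrMr; last by lra.
  rewrite hnr.
  have : 0 <= 2 * x ^+ 6 by rewrite mulr_ge0 // exprn_ge0.
  nra.
have [[hp1a [hp1b hp1c]] [hp2a [hp2b hp2c]]] := conj hp1 hp2.
have n0 : (0 < n)%N by apply: leq_trans n1.
apply: le_trans (prob2_lb hp1a hp2a n0 _); last first.
  move=> S1 S2 hs1 hs2.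
  have hct := @cost_total R n E w eps K dij S1 S2 n1 hs hc wpos eps0 hd.
  move: hct; rewrite -(ler_nat R); move: (3 * K + 20)%N => B hct.
  apply: le_trans hct _.
  rewrite !natrM !natrD.
  set L := up_log 2 n.
  have hL0 : (0 < L)%N by rewrite up_log_gt0 n1.
  have hLn : ((2 ^ L.-1)%:R <= (n%:R : R)) by rewrite ler_nat ltnW // up_log_gtn.
  have hL : (L.+1)%:R <= 4 * l.
    have h2 : ln ((2 ^ L.-1)%:R : R) <= l.
      rewrite ler_ln ?posrE ?ltr0n ?expn_gt0 //.
    rewrite natrX lnXn // -[_ *+ _]mulr_natr in h2.
    have -> : (L.+1)%:R = (L.-1)%:R + 2 :> R by rewrite -[2]/(2%:R) -natrD addn2 prednK.
    have : 0 <= (L.-1)%:R :> R by [].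
    nra.
  have hS : 1%:R + #|S1|%:R + #|S2|%:R <= 39 * x ^+ 6 * l.
    have : mu_r <= x ^+ 4 * l + 1 by move/andP: hy => [_ h]; lra.
    have : 1 <= x ^+ 4 by lra.
    have : 0 <= x ^+ 4 by lra.
    nra.
  have hm0 : 0 <= (#|E|%:R : R) by [].
  have hB0 : 0 <= (B%:R : R) by [].
  have e : (B%:R * 156 * #|E|%:R * (n%:R : R) `^ (3 / 5) * l ^+ 2 : R)
     = B%:R * ((39 * x ^+ 6 * l) * (#|E|%:R * (4 * l))).
    rewrite hn35 expr2; ring.
  apply: (le_trans _ (_ : B%:R * ((39 * x ^+ 6 * l) * (#|E|%:R * (4 * l))) <= _)); last by rewrite -e; exact: lexx.
  rewrite -mulrA ler_wpM2l //.
  apply: ler_pM => //.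
  by apply: ler_wpM2l.
rewrite hn15 hp2b.
set a := x ^+ 2.
set b := x ^+ 3.
have ha : 9 <= a by rewrite /a expr2; nra.
have hb : 3 * a <= b.
  have : 0 <= x ^+ 2 by apply: exprn_ge0.
  rewrite /b /a exprS; nra.
have e4 : x ^+ 4 = a * a by rewrite /a -exprD.
have e10 : (n%:R : R) = a * a * b * b by rewrite -hxn /a /b -!exprD.
have hmu2 : mu_r <= 11 * a * b.
  have : y <= a * a * (10 * x) by rewrite -e4; move/andP: hy => [_ h]; apply: le_trans h _; apply: ler_wpM2l; [rewrite exprn_ge0|lra].
  have -> : a * a * (10 * x) = 10 * a * b by rewrite /a /b !exprS expr0; ring.
  nra.
have D : 0 < a * a * b * b by nra.
have np1 : 0 < n%:R * p1 by lra.
have aa : 0 < a * a by nra.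
have h1 : (n%:R * p1)^-1 <= (a * a)^-1 by rewrite lef_pV2 ?posrE // -e4.
have h2 : (a * a)^-1 + mu_r / n%:R <= a^-1.
  have -> : (a * a)^-1 + mu_r / n%:R = (b * b + mu_r) / (a * a * b * b).
    rewrite e10; field; nra.
  have -> : a^-1 = (a * b * b) / (a * a * b * b) by field; nra.
  rewrite ler_pM2r ?invr_gt0 //; nra.
lra.
Qed.
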